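(* Let $k$ be a field of characteristic $p > 0$, let $n \geq 3$, let $d_1 \ge d_2 \ge \dots \ge d_n \ge 2$ be integers, and let $A = k[x_1,\ldots,x_n]/(x_1^{d_1}, \ldots, x_n^{d_n})$. Write $d_i = N_i p + r_i$ with $N_i$ integers and $0<r_i\le p$. If one of the conditions below holds, then $A$ fails to have the strong Lefschetz property: (1) $p = 2$; (2) $p \geq 3$, $d_1 > p$, $d_2 \leq p$ and $\sum_{i=2}^n (d_i - 1) > r_1$; (3) $p \geq 3$, $d_1 > p$, $d_2 \leq p$ and $r_1 + \sum_{i=2}^n(d_i-1) > p$; (4) $p \geq 3$, $d_1 \leq p$ and $\sum_{i=1}^n(d_i-1) \geq p$; (5) $p \geq 3$ and $d_2 > p$.
   Context: $A$ is graded by degree, $A=\bigoplus_{i\ge0} A_i$. A linear map has maximal rank if it is injective or surjective. A graded artinian algebra $A$ has the strong Lefschetz property if there is a linear form $\ell\in A_1$ such that for all $i\ge 0$ and all $m\ge 1$ the map $A_i\to A_{i+m}$, $a\mapsto \ell^m a$, has maximal rank. *)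

(* Defs.v *)
From HB Require Import structures.
From mathcomp Require Import all_boot all_order all_algebra.
From mathcomp Require Import mpoly.
Set Implicit Arguments. Unset Strict Implicit. Unset Printing Implicit Defensive.
Import Order.TTheory GRing.Theory.
Local Open Scope ring_scope.

(* The algebra A = k[x_0..x_{n-1}]/(x_0^{d 0}, ..., x_{n-1}^{d (n-1)}) is modelled
   by the polynomials of {mpoly k[n]} whose monomials lie in the box
   {m | forall j, m j < d j}; these polynomials are canonical representatives of
   the residue classes (the ideal is spanned by the monomials outside the box),
   and the quotient map is the truncation [trunc] below. *)

Section Monomial.
Variables (k : fieldType) (n : nat) (d : nat -> nat).

Definition in_box (m : 'X_{1..n}) : bool := [forall j : 'I_n, (m j < d j)%N].

Definition trunc (p : {mpoly k[n]}) : {mpoly k[n]} :=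
  \sum_(m <- msupp p | in_box m) p@_m *: 'X_[m].

Definition inA (i : nat) (a : {mpoly k[n]}) : Prop :=
  forall m, m \in msupp a -> in_box m /\ mdeg m = i.

Definition mulA_pow (l : {mpoly k[n]}) (m : nat) (a : {mpoly k[n]}) :=
  trunc (l ^+ m * a).

Definition max_rank_mul (l : {mpoly k[n]}) (i m : nat) : Prop :=
  (forall a b, inA i a -> inA i b -> mulA_pow l m a = mulA_pow l m b -> a = b)
  \/ (forall c, inA (i + m) c -> exists2 a, inA i a & mulA_pow l m a = c).

Definition SLP : Prop :=
  exists2 l, inA 1 l &
    forall i m : nat, (1 <= m)%N -> max_rank_mul l i m.

End Monomial.

Definition sum_dm1 (d : nat -> nat) (a b : nat) : nat :=
  (\sum_(a <= i < b) (d i - 1))%N.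

(* Main.v *)
Require Import Defs.
From HB Require Import structures.
From mathcomp Require Import all_boot all_order all_algebra.
From mathcomp Require Import mpoly.
From mathcomp Require Import zify.
Local Open Scope ring_scope.
Set Implicit Arguments. Unset Strict Implicit. Unset Printing Implicit Defensive.
Import GRing.Theory.

Section Below.
Local Open Scope nat_scope.
Lemma below_sum (n : nat) (F : nat -> nat) S :
  (S <= \sum_(i < n) F i)%N ->
  exists C : nat -> nat, (forall i, C i <= F i)%N /\ \sum_(i < n) C i = S.
Proof.
elim: n S => [|n' IH] S.
  by rewrite big_ord0 leqn0 => /eqP ->; exists (fun _ => 0%N); rewrite big_ord0.
rewrite big_ord_recr /= => HS.
have H1 : S - minn S (F n') <= \sum_(i < n') F i.
  rewrite /minn; case: ifP => H; first by rewrite subnn.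
  by rewrite leq_subLR addnC.
have [C [HC1 HC2]] := IH _ H1.
exists (fun i => if i == n' then minn S (F n') else C i); split.
  by move=> i; case: eqP => [->|_]; [rewrite geq_minr | apply: HC1].
rewrite big_ord_recr /= eqxx.
under eq_bigr => i _ do rewrite (ltn_eqF (ltn_ord i)).
by rewrite HC2 subnK // geq_minl.
Qed.
End Below.

Section Core.
Variables (k : fieldType) (n : nat).

Definition Qprop (q s : nat) (f : {mpoly k[n]}) :=
  forall u, u \in msupp f -> (forall j, (q %| u j)%N) /\ mdeg u = s.

Lemma pchar_mpoly p : p \in [pchar k] -> p \in [pchar {mpoly k[n]}].
Proof. move=> H; exact: (rmorph_pchar (@mpolyC n k) H). Qed.

Lemma QpropM q s s' f g : Qprop q s f -> Qprop q s' g -> Qprop q (s + s') (f * g).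
Proof.
move=> Hf Hg u /msuppM_le /allpairsP [[u1 u2] /= [H1 H2 ->]].
have [Hf1 Hf2] := Hf _ H1; have [Hg1 Hg2] := Hg _ H2.
split; last by rewrite mdegD Hf2 Hg2.
by move=> j; rewrite mnmDE dvdn_add.
Qed.

Lemma Qprop1 q : Qprop q 0 1.
Proof. by move=> u; rewrite msupp1 inE => /eqP ->; split; [move=> j; rewrite mnm0E dvdn0 | exact: mdeg0]. Qed.

Lemma QpropX q s f t : Qprop q s f -> Qprop q (s * t) (f ^+ t).
Proof.
move=> Hf; elim: t => [|t IH]; first by rewrite muln0 expr0; exact: Qprop1.
by rewrite exprS mulnS; apply: QpropM.
Qed.

Lemma QpropF p q s f : p \in [pchar k] -> Qprop q s f -> Qprop (q * p) (s * p) (f ^+ p).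
Proof.
move=> Hp Hf.
have Hp' := pchar_mpoly Hp.
have -> : f ^+ p = \sum_(m <- msupp f) (f@_m ^+ p *: 'X_[m *+ p]).
  rewrite -(pFrobenius_autE Hp') {1}[f]mpolyE rmorph_sum /=.
  apply: eq_bigr => m _; rewrite pFrobenius_autE exprZn mpolyXn //.
move=> u /msupp_sum_le /flattenP [s0 /mapP [m Hm ->]] /msuppZ_le.
rewrite msuppX inE => /eqP ->.
rewrite filter_predT in Hm; have [H1 H2] := Hf _ Hm.
split; last by rewrite mdegMn H2.
by move=> j; rewrite mulmnE dvdn_mul.
Qed.

Variable d : nat -> nat.

Lemma trunc0 (g : {mpoly k[n]}) :
  (forall u, u \in msupp g -> ~~ in_box d u) -> trunc d g = 0.
Proof.
move=> H; rewrite /trunc big_seq_cond big1 // => u /andP [H1 H2].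
by rewrite (negbTE (H _ H1)) in H2.
Qed.

Lemma trunc_coef (g : {mpoly k[n]}) c : g@_c = 0 -> (trunc d g)@_c = 0.
Proof.
move=> H; rewrite /trunc raddf_sum; apply: big1 => u _.
rewrite /= mcoeffZ mcoeffX; case: eqP => [->|_]; first by rewrite H mul0r.
by rewrite mulr0.
Qed.

Lemma notmax (l : {mpoly k[n]}) (q m : nat) (am cm : 'X_{1..n}) :
  Qprop q m (l ^+ m) ->
  in_box d am -> in_box d cm -> mdeg cm = (mdeg am + m)%N ->
  (forall u : 'X_{1..n}, (forall j, (q %| u j)%N) -> mdeg u = m -> ~~ in_box d (u + am)) ->
  (forall u : 'X_{1..n}, (forall j, (q %| u j)%N) -> mdeg u = m -> exists j, (cm j < u j)%N) ->
  ~ max_rank_mul d l (mdeg am) m.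
Proof.
move=> HQ Ha Hc Hdeg Hker Himg [Hinj|Hsurj].
- have Ha0 : inA d (mdeg am) ('X_[am] : {mpoly k[n]}).
    by move=> u; rewrite msuppX inE => /eqP ->.
  have H00 : inA d (mdeg am) (0 : {mpoly k[n]}) by move=> u; rewrite msupp0.
  have := Hinj _ _ Ha0 H00.
  have E : mulA_pow d l m 'X_[am] = mulA_pow d l m 0.
    rewrite /mulA_pow mulr0 /trunc msupp0 big_nil.
    apply: trunc0 => u; rewrite (perm_mem (msuppMX _ _)) => /mapP [u' Hu' ->].
    have [H1 H2] := HQ _ Hu'; rewrite addmC; exact: Hker.
  move=> /(_ E) /(congr1 (mcoeff am)); rewrite mcoeffX mcoeff0 eqxx => /eqP; by rewrite oner_eq0.
- have Hc0 : inA d (mdeg am + m) ('X_[cm] : {mpoly k[n]}).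
    by move=> u; rewrite msuppX inE => /eqP ->.
  have [a _ Ea] := Hsurj _ Hc0.
  have : (mulA_pow d l m a)@_cm = 0.
    apply: trunc_coef; apply/eqP; rewrite mcoeff_eq0; apply/negP.
    move=> /msuppM_le /allpairsP [[u1 u2] /= [H1 H2 E]].
    have [Hq1 Hq2] := HQ _ H1.
    have [j Hj] := Himg _ Hq1 Hq2.
    by move: Hj; rewrite E mnmDE ltnNge leq_addr.
  by rewrite Ea mcoeffX eqxx; apply/eqP; rewrite oner_eq0.
Qed.

Lemma pig (u : 'X_{1..n}) (G : nat -> nat) q : (0 < q)%N ->
  (forall j : 'I_n, (q %| u j)%N) -> (forall j : 'I_n, (u j < G j * q)%N) ->
  (mdeg u <= q * \sum_(j < n) (G j - 1))%N.
Proof.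
move=> q0 H1 H2; rewrite mdegE big_distrr /=; apply: leq_sum => j _.
have h : (u j %/ q < G j)%N by rewrite ltn_divLR.
rewrite -(divnK (H1 j)) mulnC leq_pmul2l //.
by move: h; case: (G j) => // g; rewrite subn1 /= ltnS.
Qed.

Definition eterm q (sel : nat -> bool) i :=
  if sel i then (q - 1 - ((d i - 1) %% q + 1))%N else ((d i - 1) %% q)%N.

Lemma key q (sel : nat -> bool) : (0 < q)%N ->
  (forall l : {mpoly k[n]}, inA d 1 l -> Qprop q q (l ^+ q)) ->
  (forall i, (i < n)%N -> (1 <= d i)%N) ->
  (forall i, (i < n)%N -> sel i -> (q <= d i - 1)%N /\ ((d i - 1) %% q + 1 < q)%N) ->
  (q <= \sum_(i < n) eterm q sel i)%N ->
  ~ SLP k n d.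
Proof.
move=> q0 HQ Hd Hsel Hsum [l Hl HS].
pose N i := ((d i - 1) %/ q)%N.
pose R i := ((d i - 1) %% q + 1)%N.
pose A i := if sel i then R i else 0%N.
pose G i := if sel i then N i else (N i).+1.
pose Cmax i := if sel i then (N i * q - 1)%N else (d i - 1)%N.
have facts : forall i, (i < n)%N ->
  [/\ (A i < d i)%N, (Cmax i < d i)%N, (d i <= A i + G i * q)%N,
      (Cmax i < G i * q)%N & (A i + q * (G i - 1) + eterm q sel i <= Cmax i)%N].
  move=> i ilt.
  have E : (d i - 1 = N i * q + (d i - 1) %% q)%N by rewrite /N -divn_eq.
  have Hr : ((d i - 1) %% q < q)%N by rewrite ltn_mod.
  have Hdi := Hd i ilt.
  rewrite /A /G /Cmax /eterm /R; case: (boolP (sel i)) => si.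
    have [h1 h2] := Hsel i ilt si.
    have N1 : (1 <= N i)%N.
      by move: E h1; case: (N i) => [|//]; rewrite mul0n add0n => ->; rewrite leqNgt Hr.
    move: E h2 N1; set r := ((d i - 1) %% q)%N; set M := N i => E h2 N1.
    have Mq : (q <= M * q)%N by rewrite leq_pmull.
    split; lia.
  move: E Hr; set r := ((d i - 1) %% q)%N; set M := N i => E Hr.
  rewrite mulSn; split; lia.
pose t := (\sum_(i < n) (G i - 1)).+1.
pose m := (q * t)%N.
have HQm : Qprop q m (l ^+ m).
  by rewrite /m exprM; apply: QpropX; apply: HQ.
pose am : 'X_{1..n} := [multinom A i | i < n].
have Hsum2 : (\sum_(i < n) A i + m <= \sum_(i < n) Cmax i)%N.
  apply: (@leq_trans (\sum_(i < n) (A i + q * (G i - 1) + eterm q sel i))); last first.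
    by apply: leq_sum => i _; have [] := facts i (ltn_ord i).
  rewrite !big_split /= /m /t mulnS -big_distrr /=.
  move: Hsum; set X := (\sum_(i < n) A i)%N; set Y := (q * _)%N; set Z := (\sum_(i < n) _)%N.
  move=> Hs; lia.
have [C [HC1 HC2]] := below_sum Hsum2.
pose cm : 'X_{1..n} := [multinom C i | i < n].
have Ham : forall j : 'I_n, am j = A j by move=> j; rewrite mnmE.
have Hcm : forall j : 'I_n, cm j = C j by move=> j; rewrite mnmE.
apply: (@notmax l q m am cm HQm).
- apply/forallP => j; rewrite Ham; by have [] := facts j (ltn_ord j).
- apply/forallP => j; rewrite Hcm; apply: leq_ltn_trans (HC1 j) _.
  by have [] := facts j (ltn_ord j).
- rewrite !mdegE; under eq_bigr => j _ do rewrite Hcm.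
  by rewrite HC2; under eq_bigr => j _ do rewrite Ham.
- move=> u Hu Hdu; apply/negP => /forallP Hb.
  have H : forall j : 'I_n, (u j < G j * q)%N.
    move=> j; have := Hb j; rewrite mnmDE Ham => h.
    have [_ _ h3 _ _] := facts j (ltn_ord j).
    move: h h3; set X := (G j * q)%N; lia.
  have hp := pig q0 Hu H.
  move: hp; rewrite Hdu /m /t mulnS; set S := (\sum_(j < n) _)%N; lia.
- move=> u Hu Hdu; case: (boolP [exists j, (cm j < u j)%N]) => [/existsP //|]; rewrite negb_exists => /forallP Hb; exfalso.
  have H : forall j : 'I_n, (u j < G j * q)%N.
    move=> j; have := Hb j; rewrite -leqNgt Hcm => h.
    have [_ _ _ h4 _] := facts j (ltn_ord j).
    have := HC1 j; move: h h4; set X := (G j * q)%N; lia.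
  have hp := pig q0 Hu H.
  move: hp; rewrite Hdu /m /t mulnS; set S := (\sum_(j < n) _)%N; lia.
- apply: HS; rewrite /m /t mulnS; set S := (\sum_(j < n) _)%N; lia.
Qed.

Lemma QpropL1 (l : {mpoly k[n]}) : inA d 1 l -> Qprop 1 1 l.
Proof. by move=> H u /H [_ ->]; split=> // j; rewrite dvd1n. Qed.

Lemma HQp p : p \in [pchar k] -> forall l : {mpoly k[n]}, inA d 1 l -> Qprop p p (l ^+ p).
Proof.
move=> Hp l /QpropL1 Hl; have := QpropF Hp Hl; by rewrite mul1n.
Qed.

Lemma HQp2 p : p \in [pchar k] ->
  forall l : {mpoly k[n]}, inA d 1 l -> Qprop (p * p) (p * p) (l ^+ (p * p)).
Proof.
move=> Hp l Hl; rewrite exprM; exact: QpropF Hp (HQp Hp Hl).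
Qed.

End Core.

Section Arith.
Local Open Scope nat_scope.

Definition sel5 (d : nat -> nat) q i :=
  (q <= d i - 1) && (2 * ((d i - 1) %% q + 1) <= q).

Lemma eterm_big d q i : 3 <= q -> odd q -> q <= d i - 1 ->
  q - 1 <= 2 * eterm d q (sel5 d q) i.
Proof.
move=> q3 oq h; rewrite /eterm /sel5 h /=.
have Hr : (d i - 1) %% q < q by rewrite ltn_mod; lia.
move: (odd_double_half q); rewrite oq => Eq.
move: Hr; set r := (d i - 1) %% q => Hr.
case: ifP => H; move: H Eq; set h2 := q./2; rewrite -!muln2; lia.
Qed.

Lemma eterm_pos d q i : 3 <= q -> 2 <= d i -> 1 <= eterm d q (sel5 d q) i.
Proof.
move=> q3 h; rewrite /eterm /sel5.
have Hr : (d i - 1) %% q < q by rewrite ltn_mod; lia.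
case: (leqP q (d i - 1)) => H /=.
  move: Hr; set r := (d i - 1) %% q => Hr; case: ifP; lia.
rewrite modn_small //; lia.
Qed.

Lemma eterm_sel_ok d q i : 3 <= q -> sel5 d q i ->
  q <= d i - 1 /\ (d i - 1) %% q + 1 < q.
Proof. move=> q3 /andP [h1 h2]; split=> //; lia. Qed.

Lemma eterm2_even d i : 2 <= d i -> ~~ odd (d i) -> 1 <= eterm d 2 (fun _ => false) i.
Proof.
move=> h o; rewrite /eterm /=; have := modn2 (d i); rewrite (negbTE o) /= => E.
lia.
Qed.

Lemma eterm4_odd d i : 2 <= d i -> odd (d i) -> 2 <= eterm d 4 (sel5 d 4) i.
Proof.
move=> h o; rewrite /eterm /sel5; have := modn2 (d i); rewrite o /= => E.
case: ifP; lia.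
Qed.

Lemma sum3 n (F : nat -> nat) : 3 <= n -> F 0 + F 1 + F 2 <= \sum_(i < n) F i.
Proof.
move=> h; rewrite -(big_mkord xpredT F) (big_ltn (leq_trans _ h)) //.
rewrite (big_ltn (leq_trans _ h)) // (big_ltn h) !addnA; exact: leq_addr.
Qed.

Lemma sum_split0 n (F : nat -> nat) : 1 <= n ->
  \sum_(i < n) F i = F 0 + \sum_(1 <= i < n) F i.
Proof. by move=> h; rewrite -(big_mkord xpredT F) (big_ltn h). Qed.

End Arith.

Unset Implicit Arguments.
Set Strict Implicit.

Theorem proposition3p5 (k : fieldType) (p : nat) (n : nat) (d : nat -> nat)
    (r1 : nat) :
  p \in [pchar k] ->
  (3 <= n)%N ->
  (forall i j : nat, (i <= j)%N -> (j < n)%N -> (d j <= d i)%N) ->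
  (forall i : nat, (i < n)%N -> (2 <= d i)%N) ->
  (exists N1 : nat, d 0%N = (N1 * p + r1)%N) -> (0 < r1)%N -> (r1 <= p)%N ->
  (p = 2%N
   \/ ((3 <= p)%N /\ (p < d 0%N)%N /\ (d 1%N <= p)%N /\ (r1 < sum_dm1 d 1 n)%N)
   \/ ((3 <= p)%N /\ (p < d 0%N)%N /\ (d 1%N <= p)%N /\ (p < r1 + sum_dm1 d 1 n)%N)
   \/ ((3 <= p)%N /\ (d 0%N <= p)%N /\ (p <= sum_dm1 d 0 n)%N)
   \/ ((3 <= p)%N /\ (p < d 1%N)%N)) ->
  ~ SLP k n d.
Proof.
move=> Hp Hn Hmono Hd2 [N1 HN1] Hr1 Hr1p Hcase.
have pr := pcharf_prime Hp.
have p2 := prime_gt1 pr.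
have p0 := prime_gt0 pr.
have Hd1 : forall i, (i < n)%N -> (1 <= d i)%N by move=> i /Hd2; apply: leq_trans.
have Hle0 : forall i, (i < n)%N -> (d i <= d 0)%N by move=> i; apply: Hmono.
have Hle1 : forall i, (1 <= i)%N -> (i < n)%N -> (d i <= d 1)%N by move=> i; apply: Hmono.
have n1 : (1 < n)%N by apply: leq_trans Hn.
have Hmod0 : ((d 0 - 1) %% p = r1 - 1)%N.
  by rewrite HN1 -addnBA // modnMDl modn_small //; lia.
have KP := fun sel => @key k n d p sel p0 (HQp Hp) Hd1.
have Hsum1 : forall sel : nat -> bool, (forall i, (1 <= i)%N -> sel i = false) ->
    (d 1%N <= p)%N ->
    (\sum_(1 <= i < n) eterm d p sel i)%N = sum_dm1 d 1 n.
  move=> sel hsel hd1; rewrite /sum_dm1; apply: eq_big_nat => i /andP [h1 h2].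
  rewrite /eterm hsel // modn_small //.
  have := Hle1 i h1 h2; have := Hd2 i h2; clear -hd1; lia.
have C3 : (p < r1 + sum_dm1 d 1 n)%N -> (d 1%N <= p)%N -> ~ SLP k n d.
  move=> hs hd1; apply: (KP (fun _ => false)) => //.
  rewrite sum_split0 ?(leq_trans _ Hn) // Hsum1 //.
  have -> : eterm d p (fun _ => false) 0%N = (r1 - 1)%N by rewrite /eterm Hmod0.
  clear -hs Hr1; lia.
have C2 : (r1 < sum_dm1 d 1 n)%N -> (r1 < p)%N -> (p < d 0%N)%N -> (d 1%N <= p)%N ->
    ~ SLP k n d.
  move=> hs hr hd0 hd1; apply: (KP (fun i => i == 0%N)).
    move=> i _ /eqP ->; rewrite Hmod0; split; clear -hr hd0 Hr1; lia.
  have hsel : forall i, (1 <= i)%N -> (i == 0%N) = false.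
    by move=> i h; case: eqP => // E; move: h; rewrite E.
  rewrite sum_split0 ?(leq_trans _ Hn) // Hsum1 //.
  have -> : eterm d p (fun i => i == 0%N) 0%N = (p - 1 - (r1 - 1 + 1))%N by rewrite /eterm Hmod0.
  clear -hs hr Hr1; lia.
case: Hcase => [Hp2 | [[p3 [hd0 [hd1 hs]]] | [[p3 [hd0 [hd1 hs]]] | [[p3 [hd0 hs]] | [p3 hd1]]]]].
-
  subst p.
  have n0 : (0 < n)%N by apply: leq_trans Hn.
  have n2 : (2 < n)%N by [].
  have Od : forall i, (i < n)%N -> (2 * odd (d i) <= eterm d 4 (sel5 d 4) i)%N.
    move=> i h; have := @eterm4_odd d i (Hd2 i h).
    by case: (odd (d i)) => H; [rewrite muln1; exact: H | rewrite muln0].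
  have Ev : forall i, (i < n)%N -> (1 - odd (d i) <= eterm d 2 (fun _ => false) i)%N.
    move=> i h; have := @eterm2_even d i (Hd2 i h).
    by case: (odd (d i)) => H; [rewrite subnn | exact: H].
  have O0 := Od 0%N n0; have O1 := Od 1%N n1; have O2 := Od 2%N n2.
  have E0 := Ev 0%N n0; have E1 := Ev 1%N n1; have E2 := Ev 2%N n2.
  case: (leqP 2 (odd (d 0%N) + odd (d 1%N) + odd (d 2%N))) => H.
  + apply: (@key k n d 4 (sel5 d 4)) => //.
    * exact: HQp2 Hp.
    * by move=> i _; apply: eterm_sel_ok.
    apply: leq_trans (sum3 _ Hn).
    move: H O0 O1 O2; set a := eterm _ _ _ 0%N; set b := eterm _ _ _ 1%N; set c := eterm _ _ _ 2%N.
    case: (odd (d 0%N)); case: (odd (d 1%N)); case: (odd (d 2%N)); clear; lia.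
  + apply: (@key k n d 2 (fun _ => false)) => //.
    * exact: HQp Hp.
    apply: leq_trans (sum3 _ Hn).
    move: H E0 E1 E2; set a := eterm _ _ _ 0%N; set b := eterm _ _ _ 1%N; set c := eterm _ _ _ 2%N.
    case: (odd (d 0%N)); case: (odd (d 1%N)); case: (odd (d 2%N)); clear; lia.
- case: (ltnP p (r1 + sum_dm1 d 1 n)) => h; first exact: C3.
  apply: C2 => //; clear -h hs; lia.
- exact: C3.
-
  apply: (KP (fun _ => false)) => //.
  suff -> : (\sum_(i < n) eterm d p (fun=> false) i)%N = sum_dm1 d 0 n by [].
  rewrite /sum_dm1 -(big_mkord xpredT); apply: eq_big_nat => i /andP [_ h].
  rewrite /eterm modn_small //; have := Hle0 i h; have := Hd2 i h; lia.
-
  have op : odd p by case: (even_prime pr) => // E; lia.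
  apply: (KP (sel5 d p)).
    by move=> i _; apply: eterm_sel_ok.
  apply: leq_trans (sum3 _ Hn).
  have h0 := @eterm_big d p 0%N p3 op.
  have h1 := @eterm_big d p 1%N p3 op.
  have h2 := @eterm_pos d p 2%N p3 (Hd2 2%N Hn).
  have hd0 := Hle0 1%N n1.
  have e0 := h0 ltac:(clear -hd1 hd0; lia). have e1 := h1 ltac:(clear -hd1; lia).
  move: e0 e1 h2 p3; set a := eterm _ _ _ 0%N; set b := eterm _ _ _ 1%N; set c := eterm _ _ _ 2%N.
  clear; lia.
Qed.
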